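(* Let $\mathcal A$ be a well-structured abstract domain with abstraction and concretisation functions $\alpha:\mathcal Q\to\mathcal A$ and $\gamma:\mathcal A\to\mathcal Q$. Then there exist monotone maps $\alpha':\mathcal S(\mathcal H_V)\to\mathcal A$ and $\gamma':\mathcal A\to\mathcal S(\mathcal H_V)$ forming a Galois embedding (with $\mathcal S(\mathcal H_V)$ ordered by inclusion) such that $\alpha=\alpha'\circ\alpha_s$ and $\gamma=\gamma_s\circ\gamma'$.
   Context: Fix a finite set $V$ of quantum variables, each a qubit with state space $\mathcal H_q\cong\mathbb C^2$; $\mathcal H_V=\bigotimes_{q\in V}\mathcal H_q$. $\mathcal D(\mathcal H_V)$ is the set of partial density operators on $\mathcal H_V$ (positive operators of trace at most $1$); $\lceil\rho\rceil$ denotes the support of $\rho$. The concrete domain is $\mathcal Q=2^{\mathcal D(\mathcal H_V)}$ ordered by inclusion. A pair of monotone maps $(\alpha,\gamma)$ between posets is a Galois connection if $c\le\gamma(a)\iff\alpha(c)\le a$, and a Galois embedding if moreover $\alpha\circ\gamma=\mathrm{id}$. A complete lattice $(\mathcal A,\le_{\mathcal A},\vee,\wedge,\bot,\top)$ with monotone $\alpha:\mathcal Q\to\mathcal A$, $\gamma:\mathcal A\to\mathcal Q$ is a well-structured abstract domain if (a) $(\alpha,\gamma)$ is a Galois embedding, and (b) for any family $\rho_i\in\mathcal D(\mathcal H_V)$ and reals $x_i>0$ with $\sum_i x_i\rho_i\in\mathcal D(\mathcal H_V)$, $\alpha(\sum_i x_i\rho_i)=\bigvee_i\alpha(\rho_i)$,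 where $\alpha(\rho)=\alpha(\{\rho\})$. The subspace domain $\mathcal S(\mathcal H_V)$ is the set of all subspaces of $\mathcal H_V$ ordered by inclusion, with join $P\vee Q=\mathrm{span}(P\cup Q)$ and meet $\cap$; its functions are $\gamma_s(P)=\{\rho\in\mathcal D(\mathcal H_V):\lceil\rho\rceil\subseteq P\}$ and $\alpha_s(R)=\bigvee\{\lceil\rho\rceil:\rho\in R\}$. *)

(* Defs.v *)
From HB Require Import structures.
From mathcomp Require Import all_boot all_order all_algebra.
From mathcomp Require Import complex.
From mathcomp Require Import boolp classical_sets.
From mathcomp Require Import Rstruct.
Set Implicit Arguments. Unset Strict Implicit. Unset Printing Implicit Defensive.
Import Order.TTheory GRing.Theory Num.Theory.
Local Open Scope classical_set_scope.
Local Open Scope ring_scope.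

Definition RR := Rdefinitions.R.
Definition CC := (RR[i])%type.

(* The set V of qubit variables is a finite type; H_V = (C^2)^{(x) V} has
   dimension 2^|V|.  Vectors of H_V are column vectors 'cV[CC]_(Hdim V). *)
Definition Hdim (V : finType) : nat := (2 ^ #|V|)%N.
Definition Hvec (V : finType) := 'cV[CC]_(Hdim V).
Definition Hop (V : finType) := 'M[CC]_(Hdim V).

Definition adjmx m n (A : 'M[CC]_(m, n)) : 'M[CC]_(n, m) :=
  (map_mx (fun z : CC => conjc z) A)^T.

Definition positive_op V (rho : Hop V) : Prop :=
  forall v : Hvec V, 0 <= (adjmx v *m rho *m v) 0 0.

Definition is_pdo V (rho : Hop V) : Prop :=
  positive_op rho /\ \tr rho <= 1.

Definition pdo (V : finType) := {rho : Hop V | is_pdo rho}.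

Definition subsp (V : finType) := {vspace Hvec V}.

Definition supp V (rho : Hop V) : subsp V :=
  (<<[seq col i rho | i <- enum 'I_(Hdim V)]>>)%VS.

Definition is_lub T (le : T -> T -> Prop) (S : set T) (x : T) : Prop :=
  (forall y, S y -> le y x) /\ (forall z, (forall y, S y -> le y z) -> le x z).

Definition vs_le V (U W : subsp V) : Prop := (U <= W)%VS.

Definition alpha_s V (R : set (pdo V)) : subsp V :=
  xget 0%VS [set P | is_lub (@vs_le V) [set supp (proj1_sig rho) | rho in R] P].

Definition gamma_s V (P : subsp V) : set (pdo V) :=
  [set rho | (supp (proj1_sig rho) <= P)%VS].

Definition monotone_wrt X Y (leX : X -> X -> Prop) (leY : Y -> Y -> Prop)
  (f : X -> Y) : Prop := forall x1 x2, leX x1 x2 -> leY (f x1) (f x2).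

Definition galois_connection X Y (leX : X -> X -> Prop) (leY : Y -> Y -> Prop)
  (alpha : X -> Y) (gamma : Y -> X) : Prop :=
  forall c a, leX c (gamma a) <-> leY (alpha c) a.

Definition galois_embedding X Y (leX : X -> X -> Prop) (leY : Y -> Y -> Prop)
  (alpha : X -> Y) (gamma : Y -> X) : Prop :=
  galois_connection leX leY alpha gamma /\ forall a, alpha (gamma a) = a.

Definition complete_lattice d (A : porderType d) : Prop :=
  forall S : set A, exists x, is_lub (fun a b : A => (a <= b)%O) S x.

Definition well_structured V d (A : porderType d)
  (alpha : set (pdo V) -> A) (gamma : A -> set (pdo V)) : Prop :=
  [/\ complete_lattice A,
      monotone_wrt (@subset _) (fun a b : A => (a <= b)%O) alpha,
      monotone_wrt (fun a b : A => (a <= b)%O) (@subset _) gamma,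
      galois_embedding (@subset _) (fun a b : A => (a <= b)%O) alpha gamma &
      forall (k : nat) (rhos : 'I_k -> pdo V) (x : 'I_k -> RR)
             (sigma : pdo V),
        (forall i, 0 < x i) ->
        proj1_sig sigma = \sum_(i < k) ((x i)%:C)%C *: proj1_sig (rhos i) ->
        is_lub (fun a b : A => (a <= b)%O)
               [set alpha [set rhos i] | i in [set: 'I_k]]
               (alpha [set sigma])].

(* Main.v *)
Require Import Defs.
From HB Require Import structures.
From mathcomp Require Import all_boot all_order all_algebra.
From mathcomp Require Import complex boolp classical_sets Rstruct.
From mathcomp Require Import spectral sesquilinear.
From mathcomp Require Import ring lra.
Set Implicit Arguments. Unset Strict Implicit. Unset Printing Implicit Defensive.
Import Order.TTheory GRing.Theory Num.Theory.
Local Open Scope ring_scope.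

Section Mx.
Variable n : nat.
Implicit Types (M : 'M[CC]_n) (u v w : 'cV[CC]_n).

Definition ip u v : CC := (adjmx u *m v) 0 0.
Definition bil M u v : CC := (adjmx u *m M *m v) 0 0.
Definition qf M v := bil M v v.
Definition psd M := forall v, 0 <= qf M v.
Definition R1 u : 'M[CC]_n := u *m adjmx u.

Lemma ipE u v : ip u v = \sum_i conjc (u i 0) * v i 0.
Proof. by rewrite /ip !mxE; apply: eq_bigr => i _; rewrite !mxE. Qed.

Lemma adjmxD p q (a b : 'M[CC]_(p,q)) : adjmx (a + b) = adjmx a + adjmx b.
Proof. by rewrite /adjmx map_mxD linearD. Qed.
Lemma adjmxZ p q c (a : 'M[CC]_(p,q)) : adjmx (c *: a) = conjc c *: adjmx a.
Proof. by apply/matrixP=> i j; rewrite !mxE rmorphM. Qed.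
Lemma adjmxN p q (a : 'M[CC]_(p,q)) : adjmx (- a) = - adjmx a.
Proof. by apply/matrixP=> i j; rewrite !mxE rmorphN. Qed.

Lemma bilDl M u u' v : bil M (u + u') v = bil M u v + bil M u' v.
Proof. by rewrite /bil adjmxD !mulmxDl mxE. Qed.
Lemma bilDr M u v v' : bil M u (v + v') = bil M u v + bil M u v'.
Proof. by rewrite /bil !mulmxDr mxE. Qed.
Lemma bilZl M c u v : bil M (c *: u) v = conjc c * bil M u v.
Proof. by rewrite /bil adjmxZ -!scalemxAl mxE. Qed.
Lemma bilZr M c u v : bil M u (c *: v) = c * bil M u v.
Proof. by rewrite /bil -!scalemxAr mxE. Qed.
Lemma bil_delta M i j : bil M (delta_mx i 0) (delta_mx j 0) = M i j.
Proof.
rewrite /bil /adjmx.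
have -> : map_mx conjc (delta_mx i 0 : 'cV[CC]_n) = delta_mx i 0.
  apply/matrixP=> a b; rewrite !mxE.
  by rewrite conjc_nat.
by rewrite trmx_delta -rowE -colE !mxE.
Qed.
Lemma qf_pair M i j c : qf M (delta_mx i 0 + c *: delta_mx j 0) =
  M i i + c * M i j + conjc c * M j i + conjc c * c * M j j.
Proof. by rewrite /qf !(bilDl,bilDr,bilZl,bilZr) !bil_delta; ring. Qed.

Lemma cD (a b : CC) : conjc (a + b) = conjc a + conjc b. Proof. exact: rmorphD. Qed.
Lemma cM (a b : CC) : conjc (a * b) = conjc a * conjc b. Proof. exact: rmorphM. Qed.
Lemma cN (a : CC) : conjc (- a) = - conjc a. Proof. exact: rmorphN. Qed.
Lemma cB (a b : CC) : conjc (a - b) = conjc a - conjc b. Proof. exact: rmorphB. Qed.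

Lemma ge0_conj (z : CC) : 0 <= z -> conjc z = z.
Proof. by move=> /ger0_real /RRe_real <-; rewrite conjc_real. Qed.

Lemma psd_herm M : psd M -> forall i j, M j i = conjc (M i j).
Proof.
move=> hM i j.
have hd : forall k, conjc (M k k) = M k k.
  by move=> k; apply: ge0_conj; move: (hM (delta_mx k 0)); rewrite /qf bil_delta.
have h1 := ge0_conj (hM (delta_mx i 0 + 1 *: delta_mx j 0)).
have h2 := ge0_conj (hM (delta_mx i 0 + 'i%C *: delta_mx j 0)).
rewrite qf_pair in h1; rewrite qf_pair in h2.
have ci : conjc 'i%C = - 'i%C :> CC by apply/eqP; rewrite eq_complex /= oppr0 !eqxx.
move: h1 h2; rewrite !(cD, cM) ?conjcK ci conjc1 !hd.
set x := M i j; set y := M j i; set x' := conjc x; set y' := conjc y.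
move=> h1 h2.
set I := ('i%C : CC) in h1 h2 *.
have ii : I * I = -1 :> CC by rewrite -expr2 sqr_i.
set a := M i i in h1 h2; set b := M j j in h1 h2.
have e : (x' - y) * 2 = 0.
  have -> : (x' - y) * 2 = (a + 1 * x' + 1 * y' + 1 * 1 * b - (a + 1 * x + 1 * y + 1 * 1 * b))
     + I * (a + - I * x' + I * y' + I * - I * b - (a + I * x + - I * y + - I * I * b))
     + (x' - y' + x - y) * (1 + I * I) by rewrite /I; ring.
  by rewrite h1 h2 ii !subrr mulr0 addr0 add0r mulr0.
by move/eqP: e; rewrite mulf_eq0 pnatr_eq0 orbF subr_eq0 => /eqP ->.
Qed.

Lemma bilDM M N u v : bil (M + N) u v = bil M u v + bil N u v.
Proof. by rewrite /bil mulmxDr mulmxDl mxE. Qed.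
Lemma bilZM c M u v : bil (c *: M) u v = c * bil M u v.
Proof. by rewrite /bil -scalemxAr -scalemxAl mxE. Qed.
Lemma bil0M u v : bil 0 u v = 0.
Proof. by rewrite /bil mulmx0 mul0mx mxE. Qed.
Lemma bil_sumM k (F : 'I_k -> 'M[CC]_n) u v :
  bil (\sum_j F j) u v = \sum_j bil (F j) u v.
Proof.
elim/big_rec2: _ => [|j x M _ <-]; first exact: bil0M.
by rewrite bilDM.
Qed.

Lemma m11 (a : 'M[CC]_(1,n)) (b : 'M[CC]_(n,1)) (c : 'M[CC]_(1,n)) (d : 'M[CC]_(n,1)) :
  (a *m b *m (c *m d)) 0 0 = (a *m b) 0 0 * (c *m d) 0 0.
Proof. by rewrite [in LHS]mxE big_ord1. Qed.

Lemma bilR1 w u v : bil (R1 w) u v = ip u w * ip w v.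
Proof. by rewrite /bil /R1 !mulmxA -(mulmxA (adjmx u *m w)) m11. Qed.

Lemma R1mul w v : R1 w *m v = ip w v *: w.
Proof. by rewrite /R1 -mulmxA [adjmx w *m v]mx11_scalar mul_mx_scalar. Qed.

Lemma ip_conj u v : ip v u = conjc (ip u v).
Proof.
rewrite !ipE rmorph_sum /=; apply: eq_bigr => i _.
by rewrite cM conjcK mulrC.
Qed.

Lemma qfR1_ge0 w v : 0 <= qf (R1 w) v.
Proof. by rewrite /qf bilR1 ip_conj mulrC mulcJ_ge0. Qed.

Lemma psd_R1 w : psd (R1 w).
Proof. by move=> v; apply: qfR1_ge0. Qed.

Lemma psdD M N : psd M -> psd N -> psd (M + N).
Proof. by move=> hM hN v; rewrite /qf bilDM; exact: addr_ge0 (hM v) (hN v). Qed.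

Lemma psdZ c M : 0 <= c -> psd M -> psd (c *: M).
Proof. by move=> hc hM v; rewrite /qf bilZM; exact: mulr_ge0 hc (hM v). Qed.

Lemma psd0 : psd 0.
Proof. by move=> v; rewrite /qf bil0M. Qed.

Lemma psd_sum k (F : 'I_k -> 'M[CC]_n) : (forall j, psd (F j)) -> psd (\sum_j F j).
Proof.
move=> h; elim/big_rec: _ => [|j M _ hM]; first exact: psd0.
exact: psdD.
Qed.

Lemma psd_spec M : psd M -> exists (D : 'I_n -> CC) (w : 'I_n -> 'cV[CC]_n),
  [/\ M = \sum_j D j *: R1 (w j), forall j, 0 <= D j &
      forall l j, ip (w l) (w j) = (l == j)%:R].
Proof.
move=> hM.
have herm : M \is hermsymmx.
  apply/is_hermitianmxP; rewrite expr0 scale1r; apply/matrixP => i j.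
  by rewrite !mxE (psd_herm hM j i).
have /orthomx_spectralP := hermitian_normalmx herm.
set P := spectralmx M; set D := spectral_diag M => eM.
have Pu : P \is unitarymx := spectral_unitarymx M.
rewrite invmx_unitary // in eM.
pose w j : 'cV[CC]_n := \col_i conjc (P j i).
have orth : forall l j, ip (w l) (w j) = (l == j)%:R.
  move=> l j; rewrite ipE.
  have := unitarymxP Pu => /matrixP /(_ l j); rewrite !mxE => <-.
  by apply: eq_bigr => i _; rewrite !mxE conjcK.
have eM2 : M = \sum_j D 0 j *: R1 (w j).
  rewrite {1}eM mul_mx_diag; apply/matrixP => i k.
  rewrite !mxE summxE; apply: eq_bigr => j _.
  by rewrite !mxE big_ord1 !mxE conjcK; ring.
exists (fun j => D 0 j), w; split => // j.
have := hM (w j); rewrite {1}eM2 /qf bil_sumM (bigD1 j) //= big1 ?addr0.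
  by rewrite bilZM bilR1 !orth eqxx !mulr1.
by move=> l hl; rewrite bilZM bilR1 orth ip_conj orth eq_sym (negbTE hl) conjc0 !mul0r mulr0.
Qed.

Definition suppn M : {vspace 'cV[CC]_n} := (<<[seq col i M | i <- enum 'I_n]>>)%VS.

Lemma span_closed (G : 'cV[CC]_n -> Prop) (X : seq 'cV[CC]_n) :
  G 0 -> (forall a u, G u -> G (a *: u)) -> (forall u v, G u -> G v -> G (u + v)) ->
  (forall x, x \in X -> G x) -> forall u, u \in <<X>>%VS -> G u.
Proof.
move=> G0 GZ GD GX u /(@coord_span _ _ _ (in_tuple X)) ->.
apply: (big_ind G) => // i _; apply: GZ; apply: GX.
exact: mem_nth (ltn_ord i).
Qed.

Lemma col_in_supp M i : col i M \in suppn M.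
Proof. by apply: memv_span; apply/mapP; exists i; rewrite ?mem_enum. Qed.

Lemma mul_in_supp M v : M *m v \in suppn M.
Proof.
have -> : M *m v = \sum_i v i 0 *: col i M.
  apply/matrixP => a b; rewrite !mxE summxE; apply: eq_bigr => i _.
  by rewrite !mxE ord1 mulrC.
by apply: rpred_sum => i _; apply: rpredZ; apply: col_in_supp.
Qed.

Lemma supp_closed (G : 'cV[CC]_n -> Prop) M :
  G 0 -> (forall a u, G u -> G (a *: u)) -> (forall u v, G u -> G v -> G (u + v)) ->
  (forall i, G (col i M)) -> forall u, u \in suppn M -> G u.
Proof.
move=> G0 GZ GD GX; apply: span_closed => // x /mapP [i _ ->]; exact: GX.
Qed.

Lemma supp_sub M (P : {vspace 'cV[CC]_n}) : (forall i, col i M \in P) -> (suppn M <= P)%VS.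
Proof. by move=> h; apply/span_subvP => x /mapP [i _ ->]. Qed.

Lemma colE' M i : col i M = M *m delta_mx i 0.
Proof. exact: colE. Qed.

End Mx.

Section Main.
Variables (V : finType) (d : Order.disp_t) (A : porderType d)
  (alpha : set (pdo V) -> A) (gamma : A -> set (pdo V)).
Hypothesis hws : well_structured alpha gamma.
Local Notation N := (Hdim V).
Local Notation le := (fun a b : A => (a <= b)%O).
Local Open Scope classical_set_scope.
Implicit Types (M : 'M[CC]_N) (u v : 'cV[CC]_N).

Definition trr M : RR := complex.Re (\tr M).

Lemma tr_ge0 M : psd M -> 0 <= \tr M.
Proof.
move=> hM; rewrite /mxtrace; apply: sumr_ge0 => i _.
by move: (hM (delta_mx i 0)); rewrite /qf bil_delta.
Qed.

Lemma trrE M : psd M -> (trr M)%:C%C = \tr M.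
Proof. by move=> /tr_ge0 /ger0_real /RRe_real. Qed.

Lemma trr_ge0 M : psd M -> 0 <= trr M.
Proof. by move=> hM; rewrite -ler0c trrE // tr_ge0. Qed.

Definition nrm M : 'M[CC]_N := ((1 + trr M)^-1)%:C%C *: M.

Lemma nrm_pdo M : psd M -> is_pdo (nrm M).
Proof.
move=> hM; have t0 := trr_ge0 hM; split.
  apply: psdZ => //; rewrite ler0c invr_ge0; lra.
rewrite /nrm mxtraceZ -trrE // -rmorphM /= -[1 : CC]/((1 : RR)%:C%C) lecR.
rewrite mulrC ler_pdivrMr; lra.
Qed.

Lemma pdo0 : is_pdo (0 : 'M[CC]_N).
Proof. split; first exact: psd0. by rewrite mxtrace0 ler01. Qed.

Definition pdo_of M : pdo V :=
  match pselect (is_pdo M) with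
  | left h => exist _ M h
  | right _ => exist _ 0 pdo0
  end.

Lemma pdo_ofE M : is_pdo M -> proj1_sig (pdo_of M) = M.
Proof. by rewrite /pdo_of; case: pselect. Qed.

Lemma pdo_of_proj (s : pdo V) : pdo_of (proj1_sig s) = s.
Proof.
case: s => M h; rewrite /pdo_of; case: pselect => h' //=.
by congr exist; apply: Prop_irrelevance.
Qed.

Definition beta M : A := alpha [set pdo_of (nrm M)].

Lemma B1 k (Ms : 'I_k -> 'M[CC]_N) (x : 'I_k -> RR) :
  (forall i, psd (Ms i)) -> (forall i, 0 < x i) ->
  is_lub le [set beta (Ms i) | i in [set: 'I_k]] (beta (\sum_i (x i)%:C%C *: Ms i)).
Proof.
move=> hM hx; case: hws => _ _ _ _ hb.
set S := \sum_i _.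
have hS : psd S by apply: psd_sum => i; apply: psdZ; [rewrite ler0c ltW | ].
have tS := trr_ge0 hS.
apply: (hb k (fun i => pdo_of (nrm (Ms i))) (fun i => x i * (1 + trr (Ms i)) / (1 + trr S))).
  move=> i; have := trr_ge0 (hM i); have := hx i => h1 h2.
  apply: mulr_gt0; [apply: mulr_gt0 => //; lra | rewrite invr_gt0; lra].
rewrite pdo_ofE; last exact: nrm_pdo.
rewrite /nrm scaler_sumr; apply: eq_bigr => i _.
rewrite pdo_ofE; last exact: nrm_pdo.
rewrite !scalerA -!rmorphM /=; congr (_ *: _); congr (_%:C%C).
have := trr_ge0 (hM i) => h2.
field; lra.
Qed.

Lemma lub_ub (S : set A) y z : is_lub le S y -> S z -> (z <= y)%O.
Proof. by case=> h _; apply: h. Qed.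
Lemma lub_least (S : set A) y T : is_lub le S y -> (forall z, S z -> (z <= T)%O) -> (y <= T)%O.
Proof. by case=> _ h; apply: h. Qed.

Lemma beta0 T : (beta 0 <= T)%O.
Proof.
have := @B1 _ (fun i : 'I_0 => 0) (fun _ => 1) (fun _ => @psd0 N) (fun _ => ltr01).
rewrite big_ord0 => h; apply: (lub_least h) => z [[]] //.
Qed.

Lemma betaZ M c : 0 < c -> psd M -> beta (c%:C%C *: M) = beta M.
Proof.
move=> hc hM.
have := @B1 _ (fun i : 'I_1 => M) (fun _ => c) (fun _ => hM) (fun _ => hc).
rewrite big_ord1 => h; apply/le_anti/andP; split.
  by apply: (lub_least h) => z [i _ <-].
by apply: (lub_ub h); exists ord0.
Qed.

Lemma betaZ' M (z : CC) : 0 < z -> psd M -> beta (z *: M) = beta M.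
Proof.
move=> hz hM; have e : (complex.Re z)%:C%C = z by apply: RRe_real; apply: gtr0_real.
by rewrite -e betaZ // -ltcR e.
Qed.

Lemma betaZle M (z : CC) T : 0 <= z -> psd M -> (beta M <= T)%O -> (beta (z *: M) <= T)%O.
Proof.
move=> hz hM h; case: (eqVneq z 0) => [->|nz]; first by rewrite scale0r beta0.
by rewrite betaZ' // lt_def nz hz.
Qed.

Lemma beta_sum_le k (F : 'I_k -> 'M[CC]_N) T : (forall i, psd (F i)) ->
  (forall i, (beta (F i) <= T)%O) -> (beta (\sum_i F i) <= T)%O.
Proof.
move=> hF hT.
have := @B1 _ F (fun _ => 1) hF (fun _ => ltr01).
under eq_bigr do rewrite scale1r.
by move=> h; apply: (lub_least h) => z [i _ <-].
Qed.

Lemma beta_sum_ge k (F : 'I_k -> 'M[CC]_N) i : (forall i, psd (F i)) ->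
  (beta (F i) <= beta (\sum_i F i))%O.
Proof.
move=> hF.
have := @B1 _ F (fun _ => 1) hF (fun _ => ltr01).
under eq_bigr do rewrite scale1r.
by move=> h; apply: (lub_ub h); exists i.
Qed.

Lemma beta_le_add M M' : psd M -> psd M' -> (beta M <= beta (M + M'))%O.
Proof.
move=> h h'.
have := @beta_sum_ge 2 (fun i => if i == ord0 then M else M') ord0.
rewrite big_ord_recl big_ord1 /= => -> //.
by move=> i; case: (_ == _).
Qed.

Lemma beta_add_le M M' T : psd M -> psd M' -> (beta M <= T)%O -> (beta M' <= T)%O ->
  (beta (M + M') <= T)%O.
Proof.
move=> h h' hT hT'.
have := @beta_sum_le 2 (fun i => if i == ord0 then M else M') T.
rewrite big_ord_recl big_ord1 /= => -> //.
  by move=> i; case: (_ == _).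
by move=> i; case: (_ == _).
Qed.

Lemma asing (s : pdo V) : alpha [set s] = beta (proj1_sig s).
Proof.
case: hws => _ _ _ _ hb.
case: s => M [hM htr] /=.
have t0 := trr_ge0 hM.
have := hb 1 (fun _ => pdo_of (nrm M)) (fun _ => 1 + trr M) (exist _ M (conj hM htr)).
move=> h; have {h} := h (fun _ => ltr_pwDl ltr01 t0).
rewrite big_ord1.
have e : M = (1 + trr M)%:C%C *: proj1_sig (pdo_of (nrm M)).
  rewrite pdo_ofE; last exact: (nrm_pdo hM).
  rewrite /nrm scalerA -rmorphM /= mulfV ?scale1r //.
  by apply/eqP; lra.
move=> /(_ e) h.
apply/le_anti/andP; split.
  by apply: (lub_least h) => z [i _ <-].
by apply: (lub_ub h); exists ord0.
Qed.


Lemma zmod_par (Z : zmodType) (a b c e : Z) : a + b + (c + e) + (a - b + (- c + e)) = a *+ 2 + e *+ 2.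
Proof. by rewrite addrACA (addrACA a) (addrACA c) !subrr addr0 add0r !mulr2n. Qed.

Definition good T u := (beta (R1 u) <= T)%O.

Lemma good0 T : good T 0.
Proof. by rewrite /good /R1 mul0mx beta0. Qed.

Lemma R1Z a u : R1 (a *: u) = (a * conjc a) *: R1 u.
Proof. by rewrite /R1 adjmxZ -scalemxAl -scalemxAr scalerA. Qed.

Lemma goodZ T a u : good T u -> good T (a *: u).
Proof. by move=> h; rewrite /good R1Z; apply: betaZle => //; [apply: mulcJ_ge0 | apply: psd_R1]. Qed.

Lemma R1par u v : R1 (u + v) + R1 (u - v) = 2%:R *: R1 u + 2%:R *: R1 v.
Proof.
rewrite /R1 !adjmxD !adjmxN !(mulmxDl, mulmxDr) !(mulmxN, mulNmx) opprK !scaler_nat.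
exact: zmod_par.
Qed.

Lemma goodD T u v : good T u -> good T v -> good T (u + v).
Proof.
move=> hu hv; rewrite /good.
have two : 0 <= (2%:R : CC) by exact: ler0n.
have h1 : psd (2%:R *: R1 u) by exact: psdZ two (psd_R1 u).
have h2 : psd (2%:R *: R1 v) by exact: psdZ two (psd_R1 v).
apply: (le_trans (beta_le_add (psd_R1 (u + v)) (psd_R1 (u - v)))).
rewrite R1par.
exact: (beta_add_le h1 h2 (betaZle two (psd_R1 u) hu) (betaZle two (psd_R1 v) hv)).
Qed.

Lemma good_sum T k (F : 'I_k -> 'cV[CC]_N) : (forall i, good T (F i)) -> good T (\sum_i F i).
Proof. move=> h; apply: (big_ind (good T)); [exact: good0 | exact: goodD | move=> i _; exact: h]. Qed.

Lemma good_mono T T' u : (T <= T')%O -> good T u -> good T' u.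
Proof. by move=> h1 h2; apply: le_trans h1. Qed.

Lemma KA M : psd M -> forall u, u \in suppn M -> good (beta M) u.
Proof.
move=> hM; have [D [w [eM hD orth]]] := psd_spec hM.
have hF : forall j, psd (D j *: R1 (w j)) by move=> j; apply: psdZ (hD j) (psd_R1 (w j)).
apply: supp_closed; [exact: good0 | exact: goodZ | exact: goodD | ].
move=> i; rewrite colE'.
have -> : M *m delta_mx i 0 = \sum_j (D j * ip (w j) (delta_mx i 0)) *: w j.
  rewrite [in LHS]eM mulmx_suml; apply: eq_bigr => j _.
  by rewrite -scalemxAl R1mul scalerA.
apply: good_sum => j.
case: (eqVneq (D j) 0) => [->|nz]; first by rewrite mul0r scale0r; exact: good0.
apply: goodZ.
have Dp : 0 < D j by rewrite lt_def nz hD.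
rewrite /good -(betaZ' Dp (psd_R1 (w j))).
have := beta_sum_ge j hF.
by rewrite -eM.
Qed.

Lemma KB M T : psd M -> (forall u, u \in suppn M -> good T u) -> (beta M <= T)%O.
Proof.
move=> hM hG; have [D [w [eM hD orth]]] := psd_spec hM.
have hF : forall j, psd (D j *: R1 (w j)) by move=> j; apply: psdZ (hD j) (psd_R1 (w j)).
rewrite eM; apply: (beta_sum_le hF) => j.
case: (eqVneq (D j) 0) => [->|nz]; first by rewrite scale0r; exact: beta0.
have Dp : 0 < D j by rewrite lt_def nz hD.
rewrite (betaZ' Dp (psd_R1 (w j))).
apply: hG.
have e : M *m w j = D j *: w j.
  rewrite [in LHS]eM mulmx_suml (bigD1 j) //= big1 ?addr0.
    by rewrite -scalemxAl R1mul orth eqxx scale1r.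
  by move=> l hl; rewrite -scalemxAl R1mul orth (negbTE hl) scale0r scaler0.
have -> : w j = (D j)^-1 *: (M *m w j) by rewrite e scalerA mulVf // scale1r.
by apply: rpredZ; apply: mul_in_supp.
Qed.

Definition Sl (l : seq (pdo V)) : subsp V := (\sum_(r <- l) supp (proj1_sig r))%VS.

Lemma Sl_cons r l : Sl (r :: l) = (supp (proj1_sig r) + Sl l)%VS.
Proof. by rewrite /Sl big_cons. Qed.

Lemma lub_exists (R : set (pdo V)) : exists l, (forall r, List.In r l -> R r) /\ forall r, R r -> (supp (proj1_sig r) <= Sl l)%VS.
Proof.
apply: contrapT => hno.
have grow : forall m, exists l, (forall r, List.In r l -> R r) /\ (m <= \dim (Sl l))%N.
  elim=> [|m [l [hl hm]]]; first by exists [::]; split.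
  have : ~ (forall r, R r -> (supp (proj1_sig r) <= Sl l)%VS) by move=> h; apply: hno; exists l.
  move=> /existsNP [r] /not_implyP [Rr nsub].
  exists (r :: l); split; first by move=> r' /= [<-|/hl].
  rewrite Sl_cons.
  have sub : (Sl l <= supp (proj1_sig r) + Sl l)%VS := addvSr _ _.
  have neq : Sl l != (supp (proj1_sig r) + Sl l)%VS.
    by apply/eqP => e; apply: nsub; rewrite e addvSl.
  have := ltn_leqif (dimv_leqif_eq sub); rewrite neq => hlt.
  exact: leq_ltn_trans hm hlt.
have [l [_ hm]] := grow (N * 1).+1.
have := dimvS (subvf (Sl l)); rewrite dimvf /= => hle.
have := leq_trans hm hle.
by rewrite /dim /= ltnn.
Qed.

Lemma alpha_s_lub (R : set (pdo V)) :
  is_lub (@vs_le V) [set supp (proj1_sig r) | r in R] (alpha_s R) /\ exists l, (forall r, List.In r l -> R r) /\ alpha_s R = Sl l.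
Proof.
have [l [hl hub]] := lub_exists R.
have lubS : is_lub (@vs_le V) [set supp (proj1_sig r) | r in R] (Sl l).
  split; first by move=> y [r Rr <-]; apply: hub.
  move=> z hz; elim: l hl {hub} => [|r l IH] hl; first by rewrite /vs_le /Sl big_nil sub0v.
  rewrite /vs_le Sl_cons subv_add; apply/andP; split.
    by apply: hz; exists r => //; apply: hl; left.
  by apply: IH => r' h; apply: hl; right.
have ex : exists P, is_lub (@vs_le V) [set supp (proj1_sig r) | r in R] P by exists (Sl l).
have := xgetPex 0%VS ex; rewrite -/(alpha_s R) => hA.
have e : alpha_s R = Sl l.
  apply: subv_anti; apply/andP; split.
    by case: hA => _ h; apply: h; case: lubS.
  by case: lubS => _ h; apply: h; case: hA.
by split; [rewrite e | exists l].
Qed.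

Lemma alpha_s_ub (R : set (pdo V)) r : R r -> (supp (proj1_sig r) <= alpha_s R)%VS.
Proof. by move=> Rr; case: (alpha_s_lub R) => [[h _] _]; apply: h; exists r. Qed.

Lemma alpha_s_least (R : set (pdo V)) P : (forall r, R r -> (supp (proj1_sig r) <= P)%VS) ->
  (alpha_s R <= P)%VS.
Proof. by move=> h; case: (alpha_s_lub R) => [[_ h'] _]; apply: h' => y [r Rr <-]; apply: h. Qed.

Lemma alpha_s_mono (R R' : set (pdo V)) : (R `<=` R') -> (alpha_s R <= alpha_s R')%VS.
Proof. by move=> h; apply: alpha_s_least => r Rr; apply: alpha_s_ub; apply: h. Qed.

Lemma KL (R : set (pdo V)) (s : pdo V) :
  (supp (proj1_sig s) <= alpha_s R)%VS -> (alpha [set s] <= alpha R)%O.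
Proof.
move=> hsub; case: hws => _ hmonA _ _ _.
rewrite asing; apply: (KB (proj2_sig s).1) => u hu.
have [_ [l [hl e]]] := alpha_s_lub R.
have : u \in Sl l by rewrite -e; exact: (subvP hsub _ hu).
elim: l hl {e} u {hu} => [|r l IH] hl u.
  by rewrite /Sl big_nil memv0 => /eqP ->; exact: good0.
rewrite Sl_cons => /memv_addP [a ha [b hb ->]]; apply: goodD.
  apply: (good_mono _ (KA (proj2_sig r).1 ha)).
  by rewrite -asing; apply: hmonA => x /= ->; apply: (hl r); left.
exact: (IH (fun r' h => hl r' (or_intror h)) b hb).
Qed.

Lemma alpha_le (R : set (pdo V)) a : (forall r, R r -> (alpha [set r] <= a)%O) -> (alpha R <= a)%O.
Proof.
case: hws => _ _ _ [hgc _] _ h.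
apply/hgc => r Rr; have /hgc := h r Rr; apply; reflexivity.
Qed.

Lemma ip_self u : u != 0 -> ip u u != 0.
Proof.
move=> nz; apply/negP => /eqP h; apply: (negP nz); apply/eqP/matrixP => i j.
rewrite ord1 mxE; rewrite ipE in h.
have hpos : forall k, predT k -> 0 <= conjc (u k 0) * u k 0.
  by move=> k _; rewrite mulrC mulcJ_ge0.
have hz := psumr_eq0P (P := predT) (F := fun k => conjc (u k 0) * u k 0) hpos h.
have := hz i isT => /eqP; rewrite mulf_eq0 conjc_eq0 orbb.
by move=> /eqP.
Qed.

Lemma main_sec :
  exists (alpha' : subsp V -> A) (gamma' : A -> subsp V),
    [/\ monotone_wrt (@vs_le V) (fun a b : A => (a <= b)%O) alpha',
        monotone_wrt (fun a b : A => (a <= b)%O) (@vs_le V) gamma',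
        galois_embedding (@vs_le V) (fun a b : A => (a <= b)%O) alpha' gamma',
        (forall R : set (pdo V), alpha R = alpha' (alpha_s R)) &
        (forall a : A, gamma a = gamma_s (gamma' a))].
Proof.
have [_ hmonA hmonG [hgc hemb] _] := hws.
have id4 : forall R : set (pdo V), alpha R = alpha (gamma_s (alpha_s R)).
  move=> R; apply/le_anti/andP; split.
    by apply: hmonA => r Rr; apply: alpha_s_ub.
  by apply: alpha_le => r hr; apply: KL.
exists (fun P => alpha (gamma_s P)), (fun a => alpha_s (gamma a)); split => //.
- move=> P Q hPQ; apply: hmonA => r hr; exact: subv_trans hr hPQ.
- by move=> a b hab; apply: alpha_s_mono; apply: hmonG.
- split; last by move=> a; rewrite -id4 hemb.
  move=> P a; split.
    move=> hP; rewrite -(hemb a); apply: alpha_le => r hr.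
    by apply: KL; exact: subv_trans hr hP.
  move=> /hgc hsub; apply: subv_trans (alpha_s_mono hsub).
  apply/subvP => u hu.
  case: (eqVneq u 0) => [->|nz]; first exact: mem0v.
  have hp := nrm_pdo (psd_R1 u).
  set s := pdo_of (nrm (R1 u)).
  have hs : proj1_sig s = nrm (R1 u) by exact: pdo_ofE hp.
  set c : CC := ((1 + trr (R1 u))^-1)%:C%C.
  have c0 : c != 0.
    have := trr_ge0 (psd_R1 u) => t0.
    have : 0 < c by rewrite ltcR invr_gt0; lra.
    by rewrite lt_def => /andP [].
  have gs : gamma_s P s.
    rewrite /gamma_s /= hs; apply: supp_sub => i.
    rewrite colE' /nrm -/c -scalemxAl R1mul.
    by apply: rpredZ; apply: rpredZ.
  apply: (subvP (alpha_s_ub gs)); rewrite hs.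
  have eu : u = (c * ip u u)^-1 *: (nrm (R1 u) *m u).
    rewrite /nrm -/c -scalemxAl R1mul !scalerA mulVf ?scale1r //.
    by rewrite mulf_neq0 // ip_self.
  rewrite [X in X \in _]eu.
  by apply: rpredZ; apply: mul_in_supp.
- move=> a; apply/seteqP; split => r hr.
    by rewrite /gamma_s /=; apply: alpha_s_ub.
  have : (alpha [set r] <= alpha (gamma a))%O by apply: KL.
  rewrite hemb => /hgc; apply; reflexivity.
Qed.

End Main.

Local Close Scope ring_scope.
Local Open Scope classical_set_scope.

Theorem mainTheorem3 (V : finType) (d : Order.disp_t) (A : porderType d)
    (alpha : set (pdo V) -> A) (gamma : A -> set (pdo V)) :
  well_structured alpha gamma ->
  exists (alpha' : subsp V -> A) (gamma' : A -> subsp V),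
    [/\ monotone_wrt (@vs_le V) (fun a b : A => (a <= b)%O) alpha',
        monotone_wrt (fun a b : A => (a <= b)%O) (@vs_le V) gamma',
        galois_embedding (@vs_le V) (fun a b : A => (a <= b)%O) alpha' gamma',
        (forall R : set (pdo V), alpha R = alpha' (alpha_s R)) &
        (forall a : A, gamma a = gamma_s (gamma' a))].
Proof. by move=> h; apply: main_sec h. Qed.
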